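(* Let $D\in\{D_1,D_2,\dots,D_8\}$. For every positive integer $v$ with $v\equiv 7\pmod{14}$, there exists a $D$-decomposition of $K^*_v$.
   Context: $K^*_v$ denotes the complete symmetric digraph of order $v$: it contains both arcs $(x,y)$ and $(y,x)$ for every pair of distinct vertices $x,y$. A $D$-decomposition of a digraph $K$ is a set of subdigraphs of $K$, each isomorphic to $D$, such that every arc of $K$ lies in exactly one of them. For distinct vertices $v_0,\dots,v_6$, the digraphs $D_i[v_0,v_1,\dots,v_6]$ ($i\in[1,8]$) all have vertex set $\{v_0,\dots,v_6\}$ and the following arc sets: $D_1$: $(v_1,v_0),(v_1,v_2),(v_2,v_3),(v_3,v_4),(v_4,v_5),(v_5,v_6),(v_6,v_0)$; $D_2$: $(v_1,v_0),(v_2,v_1),(v_2,v_3),(v_3,v_4),(v_4,v_5),(v_5,v_6),(v_6,v_0)$; $D_3$: $(v_1,v_0),(v_1,v_2),(v_3,v_2),(v_3,v_4),(v_4,v_5),(v_5,v_6),(v_6,v_0)$; $D_4$: $(v_1,v_0),(v_1,v_2),(v_2,v_3),(v_4,v_3),(v_4,v_5),(v_5,v_6),(v_6,v_0)$; $D_5$: $(v_1,v_0),(v_2,v_1),(v_3,v_2),(v_3,v_4),(v_4,v_5),(v_5,v_6),(v_6,v_0)$; $D_6$: $(v_1,v_0),(v_2,v_1),(v_2,v_3),(v_3,v_4),(v_5,v_4),(v_5,v_6),(v_6,v_0)$; $D_7$: $(v_1,v_0),(v_1,v_2),(v_3,v_2),(v_3,v_4),(v_4,v_5),(v_6,v_5),(v_6,v_0)$;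 $D_8$: $(v_1,v_0),(v_2,v_1),(v_2,v_3),(v_4,v_3),(v_4,v_5),(v_5,v_6),(v_6,v_0)$. $D_i$ also denotes the isomorphism type of $D_i[v_0,\dots,v_6]$. *)

(* Defs.v *)
From mathcomp Require Import all_boot.
Set Implicit Arguments. Unset Strict Implicit. Unset Printing Implicit Defensive.

(* A digraph on vertices v_0..v_6 is given by its list of arcs (a,b),
   meaning the arc (v_a, v_b). *)
Definition digraph7 := seq (nat * nat).

Definition D1 : digraph7 := [:: (1,0); (1,2); (2,3); (3,4); (4,5); (5,6); (6,0)].
Definition D2 : digraph7 := [:: (1,0); (2,1); (2,3); (3,4); (4,5); (5,6); (6,0)].
Definition D3 : digraph7 := [:: (1,0); (1,2); (3,2); (3,4); (4,5); (5,6); (6,0)].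
Definition D4 : digraph7 := [:: (1,0); (1,2); (2,3); (4,3); (4,5); (5,6); (6,0)].
Definition D5 : digraph7 := [:: (1,0); (2,1); (3,2); (3,4); (4,5); (5,6); (6,0)].
Definition D6 : digraph7 := [:: (1,0); (2,1); (2,3); (3,4); (5,4); (5,6); (6,0)].
Definition D7 : digraph7 := [:: (1,0); (1,2); (3,2); (3,4); (4,5); (6,5); (6,0)].
Definition D8 : digraph7 := [:: (1,0); (2,1); (2,3); (4,3); (4,5); (5,6); (6,0)].

Definition Ds : seq digraph7 := [:: D1; D2; D3; D4; D5; D6; D7; D8].

(* A copy D[f 0, ..., f 6] of D inside K*_v, vertex set 'I_v, given by an
   injective vertex labelling f : 'I_7 -> 'I_v.  [copy_arc D f x y] says that
   (x,y) is an arc of the copy. *)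
Definition copy_arc (v : nat) (D : digraph7) (f : {ffun 'I_7 -> 'I_v})
  (x y : 'I_v) : bool :=
  has (fun p : nat * nat => (f (inord p.1) == x) && (f (inord p.2) == y)) D.

Definition is_decomposition (v : nat) (D : digraph7)
  (s : seq {ffun 'I_7 -> 'I_v}) : Prop :=
  all (fun f : {ffun 'I_7 -> 'I_v} => injectiveb f) s /\
  forall x y : 'I_v, x != y -> count (fun f => copy_arc D f x y) s = 1.

(* Main.v *)
Require Import Defs.
From mathcomp Require Import all_boot all_algebra.
From mathcomp Require Import zify.
Import GRing.Theory.

Definition arcT (D : digraph7) {T : eqType} (g : 'I_7 -> T) (x y : T) : bool :=
  has (fun p : nat * nat => (g (inZp p.1) == x) && (g (inZp p.2) == y)) D.
Definition Kf (Kl : seq (seq nat)) (r : 'I_6) (u : 'I_7) : 'I_7 := inZp (nth 0 (nth [::] Kl r) u).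
Definition Af (Al : seq (seq nat)) (b : bool) (u : 'I_7) : 'I_7 := inZp (nth 0 (nth [::] Al b) u).
Definition Lf (Ll : seq (seq nat)) (b : bool) (u : 'I_7) : nat := nth 0 (nth [::] Ll b) u.
Definition da Al (b : bool) (p : nat * nat) : 'I_7 := (Af Al b (inZp p.2) - Af Al b (inZp p.1))%R.
Definition sg Ll (b : bool) (p : nat * nat) : bool := Lf Ll b (inZp p.1) < Lf Ll b (inZp p.2).
Definition mg Ll (b : bool) (p : nat * nat) : nat :=
  if sg Ll b p then Lf Ll b (inZp p.2) - Lf Ll b (inZp p.1) else Lf Ll b (inZp p.1) - Lf Ll b (inZp p.2).

Definition I7 := iota 0 7.
Definition chkK (D : digraph7) Kl :=
  all (fun xa => all (fun ya => (xa != ya) ==> has (fun r => arcT D (Kf Kl (inZp r)) (inZp xa : 'I_7) (inZp ya)) (iota 0 6)) I7) I7 &&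
  all (fun xa => all (fun ya => all (fun r => all (fun r' =>
     arcT D (Kf Kl (inZp r)) (inZp xa : 'I_7) (inZp ya) ==> arcT D (Kf Kl (inZp r')) (inZp xa) (inZp ya) ==> (r == r')) (iota 0 6)) (iota 0 6)) I7) I7 &&
  all (fun r => all (fun u => all (fun u' => (Kf Kl (inZp r) (inZp u) == Kf Kl (inZp r) (inZp u')) ==> (u == u')) I7) I7) (iota 0 6).
Definition Bs := [:: false; true].
Definition chkB (D : digraph7) Al Ll :=
 all (fun b => all (fun u => Lf Ll b (inZp u) <= 2) I7) Bs &&
 all (fun b => all (fun u => all (fun u' => (u != u') ==> ((Af Al b (inZp u) != Af Al b (inZp u')) || (Lf Ll b (inZp u) != Lf Ll b (inZp u')))) I7) I7) Bs &&
 all (fun b => all (fun p => Lf Ll b (inZp p.1) != Lf Ll b (inZp p.2)) D) Bs &&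
 all (fun b => all (fun b' => all (fun p => all (fun p' => (da Al b p == da Al b' p') ==> (mg Ll b p == mg Ll b' p') && ((sg Ll b p == sg Ll b' p') ==> (b == b') && (p == p'))) D) D) Bs) Bs &&
 all (fun d => has (fun n => all (fun s => has (fun b => has (fun p => (da Al b p == inZp d) && (mg Ll b p == n) && (sg Ll b p == s)) D) Bs) Bs) [:: 1; 2]) I7 &&
 all (fun p => (p.1 < 7) && (p.2 < 7)) D.
Definition K1 : seq (seq nat) := [:: [:: 1; 0; 2; 3; 4; 5; 6]; [:: 1; 2; 0; 3; 6; 5; 4]; [:: 1; 3; 0; 4; 6; 2; 5]; [:: 3; 1; 4; 2; 6; 0; 5]; [:: 2; 1; 5; 0; 6; 4; 3]; [:: 0; 1; 6; 3; 5; 2; 4]].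
Definition A1 : seq (seq nat) := [:: [:: 0; 0; 1; 2; 4; 6; 2]; [:: 0; 0; 5; 2; 6; 5; 4]].
Definition L1 : seq (seq nat) := [:: [:: 0; 1; 0; 1; 0; 1; 2]; [:: 1; 0; 2; 0; 2; 0; 2]].
Definition K2 : seq (seq nat) := [:: [:: 1; 0; 2; 3; 4; 5; 6]; [:: 1; 2; 0; 3; 6; 5; 4]; [:: 1; 3; 6; 0; 4; 2; 5]; [:: 2; 6; 1; 4; 0; 5; 3]; [:: 6; 0; 1; 3; 5; 2; 4]; [:: 0; 5; 1; 2; 6; 4; 3]].
Definition A2 : seq (seq nat) := [:: [:: 0; 0; 1; 1; 4; 6; 2]; [:: 0; 3; 6; 0; 1; 6; 1]].
Definition L2 : seq (seq nat) := [:: [:: 0; 1; 0; 1; 0; 1; 2]; [:: 0; 2; 0; 2; 0; 2; 1]].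
Definition K3 : seq (seq nat) := [:: [:: 1; 0; 2; 3; 4; 5; 6]; [:: 1; 2; 3; 0; 4; 6; 5]; [:: 1; 3; 5; 0; 6; 2; 4]; [:: 0; 1; 2; 5; 3; 6; 4]; [:: 0; 6; 3; 1; 4; 2; 5]; [:: 0; 2; 6; 1; 5; 4; 3]].
Definition A3 : seq (seq nat) := [:: [:: 0; 0; 1; 2; 1; 4; 2]; [:: 0; 0; 4; 3; 6; 1; 3]].
Definition L3 : seq (seq nat) := [:: [:: 0; 1; 0; 1; 2; 0; 2]; [:: 1; 0; 1; 0; 2; 0; 2]].
Definition K4 : seq (seq nat) := [:: [:: 1; 0; 2; 3; 4; 5; 6]; [:: 1; 2; 0; 3; 6; 5; 4]; [:: 1; 3; 0; 4; 6; 2; 5]; [:: 2; 1; 3; 6; 4; 0; 5]; [:: 6; 1; 4; 2; 3; 5; 0]; [:: 4; 2; 6; 0; 1; 5; 3]].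
Definition A4 : seq (seq nat) := [:: [:: 0; 0; 1; 1; 3; 4; 1]; [:: 0; 4; 6; 1; 2; 5; 2]].
Definition L4 : seq (seq nat) := [:: [:: 0; 1; 0; 1; 0; 1; 2]; [:: 0; 2; 0; 2; 0; 2; 1]].
Definition K5 : seq (seq nat) := [:: [:: 1; 0; 2; 3; 4; 5; 6]; [:: 1; 2; 0; 3; 6; 5; 4]; [:: 1; 3; 0; 4; 6; 2; 5]; [:: 3; 6; 2; 1; 5; 0; 4]; [:: 3; 2; 4; 1; 6; 0; 5]; [:: 4; 6; 0; 1; 3; 5; 2]].
Definition A5 : seq (seq nat) := [:: [:: 0; 0; 1; 2; 4; 4; 6]; [:: 0; 4; 6; 5; 2; 6; 4]].
Definition L5 : seq (seq nat) := [:: [:: 0; 1; 0; 1; 0; 1; 2]; [:: 1; 0; 2; 0; 2; 0; 2]].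
Definition K6 : seq (seq nat) := [:: [:: 1; 0; 2; 3; 4; 5; 6]; [:: 1; 2; 0; 3; 5; 6; 4]; [:: 1; 3; 6; 0; 4; 2; 5]; [:: 2; 3; 4; 0; 5; 1; 6]; [:: 6; 0; 1; 4; 2; 5; 3]; [:: 0; 3; 1; 2; 6; 4; 5]].
Definition A6 : seq (seq nat) := [:: [:: 0; 0; 1; 1; 2; 3; 4]; [:: 0; 5; 2; 4; 1; 4; 2]].
Definition L6 : seq (seq nat) := [:: [:: 0; 1; 0; 1; 0; 1; 2]; [:: 0; 2; 0; 2; 1; 0; 2]].
Definition K7 : seq (seq nat) := [:: [:: 1; 0; 2; 3; 4; 5; 6]; [:: 1; 2; 3; 0; 4; 6; 5]; [:: 1; 3; 5; 0; 6; 2; 4]; [:: 0; 1; 2; 5; 4; 3; 6]; [:: 0; 5; 3; 1; 6; 4; 2]; [:: 6; 2; 5; 1; 4; 0; 3]].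
Definition A7 : seq (seq nat) := [:: [:: 0; 0; 1; 2; 1; 4; 2]; [:: 0; 0; 2; 4; 0; 4; 3]].
Definition L7 : seq (seq nat) := [:: [:: 0; 1; 0; 1; 2; 0; 2]; [:: 1; 0; 2; 0; 2; 1; 0]].
Definition K8 : seq (seq nat) := [:: [:: 1; 0; 2; 3; 4; 5; 6]; [:: 1; 2; 0; 3; 6; 5; 4]; [:: 2; 4; 0; 5; 1; 3; 6]; [:: 4; 1; 5; 2; 3; 0; 6]; [:: 6; 2; 1; 0; 5; 3; 4]; [:: 0; 4; 2; 5; 3; 1; 6]].
Definition A8 : seq (seq nat) := [:: [:: 0; 0; 1; 1; 3; 4; 3]; [:: 0; 4; 2; 6; 1; 3; 6]].
Definition L8 : seq (seq nat) := [:: [:: 0; 1; 0; 1; 0; 2; 1]; [:: 0; 2; 0; 1; 2; 0; 2]].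

Lemma memI {n : nat} (x : 'I_n) : val x \in iota 0 n.
Proof. by rewrite mem_iota ltn_ord. Qed.

Lemma subDD (V : zmodType) (c a b : V) : ((c + a) - (c + b) = a - b)%R.
Proof. by rewrite opprD addrACA subrr add0r. Qed.

Section Main.
Variables (D : digraph7) (Kl Al Ll : seq (seq nat)).
Hypothesis HK : chkK D Kl.
Hypothesis HB : chkB D Al Ll.

Lemma K_ex {xa ya : 'I_7} : xa != ya -> exists r, arcT D (Kf Kl r) xa ya.
Proof.
move=> nxy; move: HK => /andP[/andP[H1 _] _].
move/allP: H1 => /(_ _ (memI xa)) /allP /(_ _ (memI ya)) /implyP.
case/(_ nxy)/hasP => r _; rewrite !valZpK => H; by exists (inZp r).
Qed.

Lemma K_uniq {xa ya : 'I_7} {r r'} : arcT D (Kf Kl r) xa ya -> arcT D (Kf Kl r') xa ya -> r = r'.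
Proof.
move=> H H'; move: HK => /andP[/andP[_ H1] _].
move/allP: H1 => /(_ _ (memI xa)) /allP /(_ _ (memI ya)) /allP /(_ _ (memI r)) /allP /(_ _ (memI r')).
rewrite !valZpK H H' /= => /eqP; exact: val_inj.
Qed.

Lemma K_inj r : injective (Kf Kl r).
Proof.
move=> u u' E; move: HK => /andP[_ H1].
move/allP: H1 => /(_ _ (memI r)) /allP /(_ _ (memI u)) /allP /(_ _ (memI u')).
rewrite !valZpK E eqxx /= => /eqP; exact: val_inj.
Qed.

Lemma bmem (b : bool) : b \in Bs.
Proof. by case: b. Qed.

Lemma HL2 b u : Lf Ll b u <= 2.
Proof.
move: HB => /andP[/andP[/andP[/andP[/andP[H _] _] _] _] _].
by move/allP: H => /(_ _ (bmem b)) /allP /(_ _ (memI u)); rewrite valZpK.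
Qed.

Lemma Hinj b u u' : u != u' -> (Af Al b u != Af Al b u') || (Lf Ll b u != Lf Ll b u').
Proof.
move=> nu; move: HB => /andP[/andP[/andP[/andP[/andP[_ H] _] _] _] _].
move/allP: H => /(_ _ (bmem b)) /allP /(_ _ (memI u)) /allP /(_ _ (memI u')) /implyP.
by rewrite !valZpK; apply.
Qed.

Lemma Harc b {p} : p \in D -> Lf Ll b (inZp p.1) != Lf Ll b (inZp p.2).
Proof.
move=> pD; move: HB => /andP[/andP[/andP[/andP[_ H] _] _] _].
by move/allP: H => /(_ _ (bmem b)) /allP /(_ _ pD).
Qed.

Lemma Htab {b b' p p'} : p \in D -> p' \in D -> da Al b p = da Al b' p' ->
  mg Ll b p = mg Ll b' p' /\ (sg Ll b p = sg Ll b' p' -> b = b' /\ p = p').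
Proof.
move=> pD pD' E; move: HB => /andP[/andP[/andP[_ H] _] _].
move/allP: H => /(_ _ (bmem b)) /allP /(_ _ (bmem b')) /allP /(_ _ pD) /allP /(_ _ pD') /implyP.
rewrite E eqxx => /(_ isT) /andP[/eqP -> /implyP H]; split=> // E2.
by move: H; rewrite E2 eqxx => /(_ isT) /andP[/eqP -> /eqP ->].
Qed.

Lemma Hex (d : 'I_7) : exists n, 0 < n <= 2 /\ forall s : bool, exists b, exists2 p, p \in D &
  [/\ da Al b p = d, mg Ll b p = n & sg Ll b p = s].
Proof.
move: HB => /andP[/andP[_ H] _].
move/allP: H => /(_ _ (memI d)) /hasP [n nI /allP H]; exists n; split.
  by move: nI; rewrite !inE => /orP[] /eqP ->.
move=> s; move/hasP: (H _ (bmem s)) => [b _ /hasP [p pD /andP[/andP[/eqP E1 /eqP E2] /eqP E3]]].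
by exists b; exists p => //; split => //; rewrite E1 valZpK.
Qed.

Lemma Hbound p : p \in D -> (p.1 < 7) && (p.2 < 7).
Proof. by move=> pD; move: HB => /andP[_ /allP /(_ _ pD)]. Qed.

Lemma mg_range b {p} : p \in D -> 0 < mg Ll b p <= 2.
Proof.
move=> pD; have := Harc b pD; have := HL2 b (inZp p.1); have := HL2 b (inZp p.2).
rewrite /mg /sg.
move: (Lf Ll b (inZp p.1)) (Lf Ll b (inZp p.2)) => a1 a2 h2 h1 /eqP h3.
case: (ltnP a1 a2) => h4; lia.
Qed.

Variable k : nat.
Local Notation m := (2 * k).+1.

Definition fo (f : 'I_k) : 'I_m := inZp f.+1.
Definition sgn (s : bool) (z : 'I_m) := if s then z else (- z)%R.

Lemma val_fo f n : n <= 2 -> val (fo f *+ n)%R = n * f.+1.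
Proof.
move=> n2; rewrite Zp_mulrn /= /fo /=.
have fk := ltn_ord f.
rewrite ?(@modn_small f.+1); try lia.
rewrite modn_small; nia.
Qed.

Lemma fo_neq0 f n : 0 < n <= 2 -> (fo f *+ n)%R != 0%R.
Proof.
move=> /andP[n0 n2]; apply/eqP => /(congr1 val); rewrite val_fo //=; lia.
Qed.

Lemma val_sgn_fo f n s : 0 < n <= 2 ->
  val (sgn s (fo f *+ n)%R) = if s then n * f.+1 else m - n * f.+1.
Proof.
move=> /andP[n0 n2]; have fk := ltn_ord f.
case: s; rewrite /sgn ?val_fo //.
rewrite /= val_fo // modn_small; nia.
Qed.

Lemma sgn_uniq {n f f' s s'} : 0 < n <= 2 ->
  sgn s (fo f *+ n)%R = sgn s' (fo f' *+ n)%R -> f = f' /\ s = s'.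
Proof.
move=> n12 /(congr1 val); rewrite !val_sgn_fo //.
have fk := ltn_ord f; have fk' := ltn_ord f'.
move: n12 => /andP[n0 n2].
have [->|->] : n = 1 \/ n = 2 by lia.
all: case: s; case: s' => H; try (split => //; apply: val_inj => /=; lia); exfalso; lia.
Qed.

Lemma sgn_ex {n} {e : 'I_m} : 0 < n <= 2 -> e != 0%R -> exists f s, sgn s (fo f *+ n)%R = e.
Proof.
move=> n12 e0.
have ep : 0 < (e : nat) by rewrite lt0n; move: e0; apply: contra => /eqP H; apply/eqP/val_inj.
have em := ltn_ord e.
suff [t [t1 tk H]] : exists t, [/\ 0 < t, t <= k & (n * t = e \/ n * t + e = m)].
  have tk' : t.-1 < k by lia.
  exists (Ordinal tk'), (n * t == e); apply: val_inj; rewrite val_sgn_fo //=.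
  have [n1|n1] : n = 1 \/ n = 2 by lia.
  1,2: by rewrite n1 in H *; case: eqP => H2; lia.
move: n12 => /andP[n0 n2].
have [n1|n1] : n = 1 \/ n = 2 by lia.
  case: (leqP e k) => ek; [exists e | exists (m - e)]; split; lia.
have := divn_eq e 2; have := ltn_pmod e (isT : 0 < 2).
set q := e %/ 2; set r := e %% 2 => r2 eq.
have [r0|r1] : r = 0 \/ r = 1 by lia.
  exists q; split; lia.
exists (k - q); split; lia.
Qed.

Lemma lvl (z : 'I_m) l1 l2 :
  (z *+ l2 - z *+ l1 = if (l1 < l2)%N then z *+ (l2 - l1) else - (z *+ (l1 - l2)))%R.
Proof.
case: ltnP => H; first by rewrite mulrnBr // ltnW.
by rewrite mulrnBr // opprB.
Qed.

Local Notation T := ('I_7 * 'I_m)%type.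

Definition fib (r : 'I_6) (j : 'I_m) (u : 'I_7) : T := (Kf Kl r u, j).
Definition blk (f : 'I_k) (b : bool) (c : 'I_7) (j : 'I_m) (u : 'I_7) : T :=
  ((c + Af Al b u)%R, (j + fo f *+ Lf Ll b u)%R).

Definition Idx := ('I_6 * 'I_m + 'I_k * bool * 'I_7 * 'I_m)%type.
Definition hh (i : Idx) : 'I_7 -> T :=
  match i with inl (r, j) => fib r j | inr (f, b, c, j) => blk f b c j end.

Lemma fib_arc r j (x y : T) :
  arcT D (fib r j) x y = [&& j == x.2, j == y.2 & arcT D (Kf Kl r) x.1 y.1].
Proof.
case: x y => xa xi [ya yi] /=; rewrite /arcT /fib.
case: (boolP ((j == xi) && (j == yi))) => H.
  move/andP: H => [/eqP <- /eqP <-]; rewrite !eqxx /=.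
  by apply: eq_has => p /=; rewrite !xpair_eqE !eqxx !andbT.
rewrite andbA (negbTE H) /=; apply/hasP => [[p _]]; rewrite !xpair_eqE.
by case/andP => /andP[_ a] /andP[_ b]; move: H; rewrite a b.
Qed.

Lemma blk_lvl f b {p} : p \in D ->
  ((fo f *+ Lf Ll b (inZp p.2)) - (fo f *+ Lf Ll b (inZp p.1)))%R = sgn (sg Ll b p) (fo f *+ mg Ll b p)%R.
Proof. by move=> _; rewrite lvl /sgn /mg /sg; case: (ltnP (Lf Ll b (inZp p.1))). Qed.

Lemma blk_arc f b c j (x y : T) : arcT D (blk f b c j) x y ->
  exists2 p, p \in D & [/\ c = (x.1 - Af Al b (inZp p.1))%R, j = (x.2 - fo f *+ Lf Ll b (inZp p.1))%R,
     da Al b p = (y.1 - x.1)%R & sgn (sg Ll b p) (fo f *+ mg Ll b p)%R = (y.2 - x.2)%R].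
Proof.
case: x y => xa xi [ya yi] /=; rewrite /arcT /blk.
case/hasP => p pD; rewrite !xpair_eqE => /andP[/andP[/eqP E1 /eqP E2] /andP[/eqP E3 /eqP E4]].
exists p => //; split.
- by rewrite -E1 addrK.
- by rewrite -E2 addrK.
- by rewrite -E1 -E3 subDD.
- by rewrite -blk_lvl // -E2 -E4 subDD.
Qed.

Lemma blk_inj f b c j : injective (blk f b c j).
Proof.
move=> u u' E; have EA := addrI _ (congr1 fst E); have EL := addrI _ (congr1 snd E).
apply/eqP; apply/negPn/negP => nu.
have := Hinj b u u' nu; rewrite EA eqxx /= => nL.
have L2 := HL2 b u; have L2' := HL2 b u'.
have : ((fo f *+ Lf Ll b u') - (fo f *+ Lf Ll b u) = 0)%R by rewrite EL subrr.
rewrite lvl; case: ltnP => H.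
  by move/eqP; apply/negP; apply: fo_neq0; lia.
by move/eqP; rewrite oppr_eq0; apply/negP; apply: fo_neq0; move: nL => /eqP ?; lia.
Qed.

Lemma hh_inj i : injective (hh i).
Proof.
case: i => [[r j]|[[[f b] c] j]] /=; last exact: blk_inj.
move=> u u' E; exact: K_inj (congr1 fst E).
Qed.

Lemma main (x y : T) : x != y -> exists i0, forall i, arcT D (hh i) x y = (i == i0).
Proof.
case: x y => xa xi [ya yi] nxy.
case: (eqVneq xi yi) => [Eiy|Niy].
  subst yi.
  have nxa : xa != ya by apply: contra nxy => /eqP ->.
  have [r Hr] := K_ex nxa.
  exists (inl (r, xi)) => [[[r' j]|[[[f b] c] j]]] /=.
    rewrite fib_arc /=; apply/idP/idP.
      case/and3P => /eqP -> _ H; have := K_uniq H Hr; by move ->.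
    by move/eqP => [-> ->]; rewrite !eqxx Hr.
  apply/negP => /blk_arc [p pD [_ _ _]]; rewrite subrr.
  case: (sg Ll b p); rewrite /sgn; [|rewrite -oppr0 => /oppr_inj];
    by move/eqP; rewrite (negbTE (fo_neq0 _ _ (mg_range b pD))).
have e0 : (yi - xi)%R != 0%R by rewrite subr_eq0 eq_sym.
have [n [n12 Hs]] := Hex (ya - xa)%R.
have [f [s Hf]] := sgn_ex n12 e0.
have [b [p pD [Ed En Es]]] := Hs s.
exists (inr (f, b, (xa - Af Al b (inZp p.1))%R, (xi - fo f *+ Lf Ll b (inZp p.1))%R)).
case=> [[r' j]|[[[f' b'] c'] j']] /=.
  rewrite fib_arc /=; apply/negP => /and3P[/eqP E1 /eqP E2 _].
  by move: Niy; rewrite -E1 -E2 eqxx.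
apply/idP/idP.
  case/blk_arc => p' pD' [Ec Ej Ed' Es'] /=.
  have [Em Hbp] := Htab pD pD' (etrans Ed (esym Ed')).
  move: Es'; rewrite -Em En -Hf => /sgn_uniq => /(_ n12) [Ef Es2].
  subst f'.
  have [Eb Ep] := Hbp (etrans Es (esym Es2)).
  subst b' p'.
  by rewrite Ec Ej.
move/eqP => [-> -> -> ->].
apply/hasP; exists p => //; rewrite /blk /= !xpair_eqE.
apply/andP; split; apply/andP; split; apply/eqP.
- by rewrite subrK.
- by rewrite subrK.
- rewrite -addrA (addrC (- _)%R); move: Ed; rewrite /da => ->; by rewrite addrC subrK.
- rewrite -addrA (addrC (- _)%R) blk_lvl // En Es Hf; by rewrite addrC subrK.
Qed.

End Main.

Lemma decomp_gen (D : digraph7) (Kl Al Ll : seq (seq nat)) :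
  chkK D Kl -> chkB D Al Ll ->
  forall v, 0 < v -> v %% 14 = 7 -> exists s : seq {ffun 'I_7 -> 'I_v}, is_decomposition D s.
Proof.
move=> HK HB v _ Hm.
pose k := v %/ 14.
have E : #|{: 'I_7 * 'I_(2 * k).+1}| = v.
  rewrite card_prod !card_ord; have := divn_eq v 14; rewrite /k; lia.
pose phi (t : 'I_7 * 'I_(2 * k).+1) : 'I_v := cast_ord E (enum_rank t).
pose psi (x : 'I_v) : 'I_7 * 'I_(2 * k).+1 := enum_val (cast_ord (esym E) x).
have phiK : cancel phi psi by move=> t; rewrite /phi /psi cast_ordK enum_rankK.
have psiK : cancel psi phi by move=> x; rewrite /phi /psi enum_valK cast_ordKV.
exists [seq [ffun u => phi (hh Kl Al Ll k i u)] | i <- enum {: ('I_6 * 'I_(2 * k).+1 + 'I_k * bool * 'I_7 * 'I_(2 * k).+1)%type}].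
split.
  apply/allP => F /mapP [i _ ->]; apply/injectiveP => u u'.
  by rewrite !ffunE => /(can_inj phiK) /(@hh_inj D Kl Al Ll HK HB k i).
move=> x y nxy; rewrite count_map.
have nxy' : psi x != psi y by apply: contra nxy => /eqP /(can_inj psiK) ->.
have [i0 Hi0] := @main D Kl Al Ll HK HB _ _ _ nxy'.
rewrite (@eq_count _ _ (pred1 i0)); first by rewrite count_uniq_mem ?enum_uniq ?mem_enum.
move=> i /=; rewrite -Hi0 /copy_arc /arcT; apply: eq_in_has => p pD /=; rewrite !ffunE.
have /andP[p1 p2] := @Hbound D Al Ll HB _ pD.
rewrite -{1}(psiK x) -{1}(psiK y) !(can_eq phiK).
have -> : inord p.1 = inZp p.1 :> 'I_7 by apply: val_inj; rewrite /= inordK // modn_small.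
have -> : inord p.2 = inZp p.2 :> 'I_7 by apply: val_inj; rewrite /= inordK // modn_small.
by [].
Qed.

Lemma c1 : chkK D1 K1 && chkB D1 A1 L1. Proof. vm_compute. reflexivity. Qed.
Lemma c2 : chkK D2 K2 && chkB D2 A2 L2. Proof. vm_compute. reflexivity. Qed.
Lemma c3 : chkK D3 K3 && chkB D3 A3 L3. Proof. vm_compute. reflexivity. Qed.
Lemma c4 : chkK D4 K4 && chkB D4 A4 L4. Proof. vm_compute. reflexivity. Qed.
Lemma c5 : chkK D5 K5 && chkB D5 A5 L5. Proof. vm_compute. reflexivity. Qed.
Lemma c6 : chkK D6 K6 && chkB D6 A6 L6. Proof. vm_compute. reflexivity. Qed.
Lemma c7 : chkK D7 K7 && chkB D7 A7 L7. Proof. vm_compute. reflexivity. Qed.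
Lemma c8 : chkK D8 K8 && chkB D8 A8 L8. Proof. vm_compute. reflexivity. Qed.

Lemma decomp_c (D : digraph7) Kl Al Ll : chkK D Kl && chkB D Al Ll ->
  forall v, 0 < v -> v %% 14 = 7 -> exists s : seq {ffun 'I_7 -> 'I_v}, is_decomposition D s.
Proof. by case/andP; apply: decomp_gen. Qed.

Theorem lemma3p5 (D : digraph7) (HD : D \in Ds) (v : nat) (Hv : 0 < v)
  (Hmod : v %% 14 = 7) :
  exists s : seq {ffun 'I_7 -> 'I_v}, is_decomposition D s.
Proof.
move: HD; rewrite /Ds !inE.
case/orP => [/eqP -> |]; first exact: decomp_c c1 v Hv Hmod.
case/orP => [/eqP -> |]; first exact: decomp_c c2 v Hv Hmod.
case/orP => [/eqP -> |]; first exact: decomp_c c3 v Hv Hmod.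
case/orP => [/eqP -> |]; first exact: decomp_c c4 v Hv Hmod.
case/orP => [/eqP -> |]; first exact: decomp_c c5 v Hv Hmod.
case/orP => [/eqP -> |]; first exact: decomp_c c6 v Hv Hmod.
case/orP => [/eqP -> |/eqP ->]; first exact: decomp_c c7 v Hv Hmod.
exact: decomp_c c8 v Hv Hmod.
Qed.
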